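(* Let $[X,d,m]$ be a metric random walk space with finite invariant measure $\nu$. Then $\Delta_m$ is ergodic if and only if $[X,d,m]$ (with $\nu$) is $m$-connected.
   Context: A metric random walk space $[X,d,m]$ is a Polish metric space $(X,d)$ with a family $m=(m_x)_{x\in X}$ of Borel probability measures, $x\mapsto m_x(A)$ Borel measurable, each with finite first moment. A Radon measure $\nu$ is invariant if $\nu(A)=\int_X m_x(A)d\nu(x)$ for all $\nu$-measurable $A$. Iterates $m_x^{*1}=m_x$, $m_x^{*n}(A)=\int_X m_z(A)dm_x^{*(n-1)}(z)$; $N^m_D=\{x:m_x^{*n}(D)=0\ \forall n\in\mathbb N\}$. The space is $m$-connected if $\nu(N^m_D)=0$ for every $\nu$-measurable $D$ with $0<\nu(D)<\infty$. The Laplacian is $\Delta_m f(x)=\int_X(f(y)-f(x))dm_x(y)$ with domain $L^1(X,\nu)\cap L^2(X,\nu)$; $\Delta_m$ is ergodic if every $u$ in its domain with $\Delta_m u=0$ $\nu$-a.e. is $\nu$-a.e. constant. *)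

(* Defs.v *)
From HB Require Import structures.
From mathcomp Require Import all_boot all_order all_algebra.
From mathcomp Require Import all_classical all_reals all_analysis.
Set Implicit Arguments.
Unset Strict Implicit.
Unset Printing Implicit Defensive.
Import Order.TTheory GRing.Theory Num.Theory.
Local Open Scope classical_set_scope.
Local Open Scope ring_scope.

Section metric.
Context {R : realType} {X : Type}.

Definition is_metric (dist : X -> X -> R) : Prop :=
  [/\ forall x y, 0 <= dist x y,
      forall x y, dist x y = 0 <-> x = y,
      forall x y, dist x y = dist y x
    & forall x y z, dist x z <= dist x y + dist y z].

Definition metric_open (dist : X -> X -> R) (U : set X) : Prop :=
  forall x, U x -> exists2 r : R, 0 < r & [set y | dist x y < r] `<=` U.

Definition metric_complete (dist : X -> X -> R) : Prop :=
  forall u : nat -> X,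
    (forall e : R, 0 < e -> exists N, forall n k, (N <= n)%N -> (N <= k)%N ->
        dist (u n) (u k) < e) ->
    exists l, forall e : R, 0 < e -> exists N, forall n, (N <= n)%N ->
        dist (u n) l < e.

Definition metric_separable (dist : X -> X -> R) : Prop :=
  exists S : set X, countable S /\
    forall x (e : R), 0 < e -> exists2 s, S s & dist x s < e.

Definition polish_metric (dist : X -> X -> R) : Prop :=
  [/\ is_metric dist, metric_complete dist & metric_separable dist].
End metric.

Section step.
Context d (X : measurableType d) (R : realType).
Variable m : R.-ker X ~> X.
Variable mu : {measure set X -> \bar R}.

Definition kstep (A : set X) : \bar R := (\int[mu]_z m z A)%E.

Let kstep0 : kstep set0 = 0%E.
Proof.
by rewrite /kstep (eq_integral (cst 0%E)) ?integral0// => y _; rewrite measure0.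
Qed.

Let kstep_ge0 A : (0 <= kstep A)%E. Proof. exact: integral_ge0. Qed.

Let kstep_sigma_additive : semi_sigma_additive kstep.
Proof.
move=> U mU tU mUU; rewrite [X in _ --> X](_ : _ =
  (\int[mu]_y (\sum_(n <oo) m y (U n)))%E); last first.
  apply: eq_integral => V _.
  by apply/esym/cvg_lim => //; exact/measure_semi_sigma_additive.
apply/cvg_closeP; split.
  by apply: is_cvg_nneseries => n _ _; exact: integral_ge0.
rewrite closeE// integral_nneseries// => n.
exact: measurable_kernel.
Qed.

HB.instance Definition _ := isMeasure.Build _ _ R
  kstep kstep0 kstep_ge0 kstep_sigma_additive.

Definition mstep : {measure set X -> \bar R} := kstep.
End step.

Section iterates.
Context d (X : measurableType d) (R : realType).
Variable m : R.-ker X ~> X.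

(* miter n x = m_x^{*(n+1)} : miter 0 x = m_x,
   miter (n+1) x (A) = \int m_z(A) d(miter n x)(z) *)
Fixpoint miter (n : nat) (x : X) : {measure set X -> \bar R} :=
  match n with
  | 0 => m x
  | n'.+1 => mstep m (miter n' x)
  end.

(* m_x^{*n} for n >= 1 *)
Definition mconv (n : nat) (x : X) : {measure set X -> \bar R} := miter n.-1 x.

Definition NmD (D : set X) : set X :=
  [set x | forall n : nat, (0 < n)%N -> mconv n x D = 0%E].

Definition m_connected (nu : {measure set X -> \bar R}) : Prop :=
  forall D : set X, measurable D -> (0 < nu D)%E -> (nu D < +oo)%E ->
    nu (NmD D) = 0%E.

Definition laplacian (f : X -> R) (x : X) : \bar R :=
  (\int[m x]_y ((f y - f x)%:E))%E.

(** domain L^1(X,nu) /\ L^2(X,nu) (representatives) *)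
Definition in_L1L2 (nu : {measure set X -> \bar R}) (u : X -> R) : Prop :=
  nu.-integrable setT (EFin \o u) /\
  (\int[nu]_x ((u x) ^+ 2)%:E < +oo)%E.

Definition ergodic_laplacian (nu : {measure set X -> \bar R}) : Prop :=
  forall u : X -> R, in_L1L2 nu u ->
    {ae nu, forall x, laplacian u x = 0%E} ->
    exists c : R, {ae nu, forall x, u x = c}.
End iterates.

Definition invariant_measure d (X : measurableType d) (R : realType)
  (m : R.-ker X ~> X) (nu : {measure set X -> \bar R}) : Prop :=
  forall A : set X, measurable A -> nu A = (\int[nu]_x m x A)%E.

(** [X, dist, m] is a metric random walk space:
    (X, dist) Polish, the sigma-algebra of X is the Borel one, each m_x a
    Borel probability measure (m is a probability kernel, so x |-> m_x(A)
    is measurable), each m_x with finite first moment. *)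
Definition metric_random_walk_space d (X : measurableType d) (R : realType)
  (dist : X -> X -> R) (m : R.-pker X ~> X) : Prop :=
  [/\ polish_metric dist,
      (@measurable d X) = <<s metric_open dist >>
    & forall x, (\int[m x]_y (dist x y)%:E < +oo)%E].

(* Main.v *)
Require Import Defs.
From HB Require Import structures.
From mathcomp Require Import all_boot all_order all_algebra.
From mathcomp Require Import all_classical all_reals all_analysis.
From mathcomp Require Import measurable_realfun.
Local Open Scope classical_set_scope.
Local Open Scope ring_scope.

Module Helpers.
Set Implicit Arguments.
Unset Strict Implicit.
Unset Printing Implicit Defensive.
Import Order.TTheory GRing.Theory Num.Theory.
Local Open Scope ereal_scope.

Section K.
Context d (X : measurableType d) (R : realType) (m : R.-ker X ~> X)
  (mu : {measure set X -> \bar R}).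

Let integral_mstep_indic E (mE : measurable E) :
  \int[mstep m mu]_z (\1_E z)%:E = \int[mu]_y (\int[m y]_z (\1_E z)%:E).
Proof.
rewrite integral_indic//= /kstep.
by apply: eq_integral => y _; rewrite integral_indic.
Qed.

Import HBNNSimple.

Let integral_mstep_nnsfun (f : {nnsfun X >-> R}) :
  \int[mstep m mu]_z (f z)%:E = \int[mu]_y (\int[m y]_z (f z)%:E).
Proof.
under [in LHS]eq_integral do rewrite fimfunE -fsumEFin//.
rewrite ge0_integral_fsum//; last 2 first.
  - by move=> r; exact/measurable_EFinP/measurableT_comp.
  - by move=> r z _; rewrite EFinM nnfun_muleindic_ge0.
under [in RHS]eq_integral.
  move=> y _.
  under eq_integral.
    by move=> z _; rewrite fimfunE -fsumEFin//; over.
  rewrite /= ge0_integral_fsum//; last 2 first.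
    - by move=> r; exact/measurable_EFinP/measurableT_comp.
    - by move=> r z _; rewrite EFinM nnfun_muleindic_ge0.
  under eq_fsbigr.
    move=> r _.
    rewrite (integralZl_indic _ (fun r => f @^-1` [set r]))//; last first.
      by move=> r0; rewrite preimage_nnfun0.
    rewrite integral_indic// setIT.
    over.
  over.
rewrite /= ge0_integral_fsum//; last 2 first.
  - move=> r; apply: measurable_funeM.
    exact: (measurable_kernel m (f @^-1` [set r]) _).
  - move=> n y _.
    have := mulemu_ge0 (fun n => f @^-1` [set n]).
    by apply; exact: preimage_nnfun0.
apply: eq_fsbigr => r _.
rewrite (integralZl_indic _ (fun r => f @^-1` [set r]))//; last first.
  exact: preimage_nnfun0.
rewrite /= integral_mstep_indic//.
have [r0|r0] := leP 0%R r.
  rewrite ge0_integralZl//.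
    by under eq_integral do rewrite integral_indic// setIT.
  exact: (measurable_kernel m (f @^-1` [set r]) _).
rewrite integral0_eq ?mule0.
  by rewrite integral0_eq// => y _; rewrite preimage_nnfun0// measure0 mule0.
by move=> y _; rewrite integral0_eq// => z _; rewrite preimage_nnfun0// indic0.
Qed.

Lemma integral_mstep f : (forall z, 0 <= f z) -> measurable_fun [set: X] f ->
  \int[mstep m mu]_z f z = \int[mu]_y (\int[m y]_z f z).
Proof.
move=> f0 mf.
pose f_ := nnsfun_approx measurableT mf.
transitivity (\int[mstep m mu]_z (lim ((f_ n z)%:E @[n --> \oo]))).
  by apply/eq_integral => z _; apply/esym/cvg_lim => //=; exact: cvg_nnsfun_approx.
rewrite monotone_convergence//; last 3 first.
  by move=> n; exact/measurable_EFinP.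
  by move=> n z _; rewrite lee_fin.
  by move=> z _ a b ab; rewrite lee_fin; exact/lefP/nd_nnsfun_approx.
rewrite (_ : (fun _ => _) =
    (fun n => \int[mu]_y (\int[m y]_z (f_ n z)%:E)))//; last first.
  by apply/funext => n; rewrite integral_mstep_nnsfun.
transitivity (\int[mu]_y lim ((\int[m y]_z (f_ n z)%:E) @[n --> \oo])).
  rewrite -monotone_convergence//; last 3 first.
  - move=> n; apply: measurable_fun_integral_kernel => //.
    + by move=> U mU; exact: (measurable_kernel m _ mU).
    + by move=> z; rewrite lee_fin.
    + exact/measurable_EFinP.
  - by move=> n y _; apply: integral_ge0 => // z _; rewrite lee_fin.
  - move=> y _ a b ab; apply: ge0_le_integral => //.
    + by move=> z _; rewrite lee_fin.
    + exact/measurable_EFinP.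
    + exact/measurable_EFinP.
    + by move=> z _; rewrite lee_fin; exact/lefP/nd_nnsfun_approx.
apply: eq_integral => y _; rewrite -monotone_convergence//; last 3 first.
  - by move=> n; exact/measurable_EFinP.
  - by move=> n z _; rewrite lee_fin.
  - by move=> z _ a b ab; rewrite lee_fin; exact/lefP/nd_nnsfun_approx.
by apply: eq_integral => z _; apply/cvg_lim => //; exact: cvg_nnsfun_approx.
Qed.

Lemma measurable_int_m f : (forall z, 0 <= f z) -> measurable_fun [set: X] f ->
  measurable_fun [set: X] (fun y => \int[m y]_z f z).
Proof.
move=> f0 mf; apply: measurable_fun_integral_kernel => //.
by move=> U mU; exact: (measurable_kernel m _ mU).
Qed.
End K.

Section Z.
Context d (X : measurableType d) (R : realType) (mu : {measure set X -> \bar R}).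

Lemma ae_of_int0 (f : X -> \bar R) : (forall x, 0 <= f x) ->
  measurable_fun [set: X] f -> \int[mu]_x f x = 0 -> \forall x \ae mu, f x = 0.
Proof.
move=> f0 mf i0.
have : \int[mu]_(x in [set: X]) `|f x| = 0.
  by rewrite -i0; apply: eq_integral => x _; rewrite gee0_abs.
move/(ae_eq_integral_abs mu measurableT mf).
by apply: filterS => x /(_ I).
Qed.

Lemma ae_of_int0_in (A : set X) (f : X -> \bar R) : measurable A ->
  (forall x, 0 <= f x) ->
  measurable_fun [set: X] f -> \int[mu]_(x in A) f x = 0 ->
  \forall x \ae mu, A x -> f x = 0.
Proof.
move=> mA f0 mf i0.
have : \int[mu]_(x in A) `|f x| = 0.
  by rewrite -i0; apply: eq_integral => x _; rewrite gee0_abs.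
by move/(ae_eq_integral_abs mu mA (measurable_funS measurableT (subsetT A) mf)).
Qed.

Lemma int0_of_ae (f : X -> \bar R) : measurable_fun [set: X] f ->
  (\forall x \ae mu, f x = 0) -> \int[mu]_x f x = 0.
Proof.
move=> mf ae0.
rewrite (ae_eq_integral (cst 0))//; first exact: integral0.
by apply: filterS ae0 => x ->.
Qed.

Lemma ae_of_measure0 (A : set X) : measurable A -> mu A = 0 ->
  \forall x \ae mu, ~ A x.
Proof.
move=> mA A0; exists A; split => // x /=; apply: contra_notP => ?.
by [].
Qed.

Lemma measure0_of_ae (A : set X) : measurable A ->
  (\forall x \ae mu, ~ A x) -> mu A = 0.
Proof.
move=> mA [B [mB B0 sB]].
apply/eqP; rewrite -measure_le0 -B0 le_measure ?inE//.
by move=> x Ax; apply: sB => /=; apply.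
Qed.
End Z.

Section Iter.
Context d (X : measurableType d) (R : realType) (m : R.-ker X ~> X).

Lemma miter_meas_rev n :
  (forall f : X -> \bar R, (forall z, 0 <= f z) -> measurable_fun [set: X] f ->
    measurable_fun [set: X] (fun x => \int[miter m n x]_y f y)) /\
  (forall (f : X -> \bar R) x, (forall z, 0 <= f z) -> measurable_fun [set: X] f ->
    \int[miter m n.+1 x]_y f y = \int[m x]_z \int[miter m n z]_y f y).
Proof.
elim: n => [|n [IHa IHb]].
  split; first by move=> f f0 mf; exact: measurable_int_m.
  by move=> f x f0 mf; rewrite /= integral_mstep.
split.
  move=> f f0 mf /=.
  under eq_fun do rewrite integral_mstep//.
  apply: IHa.
    by move=> z; apply: integral_ge0.
  exact: measurable_int_m.
move=> f x f0 mf.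
rewrite [LHS]/= integral_mstep//.
rewrite IHb//; last 2 first.
- by move=> z; apply: integral_ge0.
- exact: measurable_int_m.
by apply: eq_integral => z _ /=; rewrite integral_mstep.
Qed.

Lemma miter_indic n x A : measurable A ->
  miter m n x A = \int[miter m n x]_y (\1_A y)%:E.
Proof. by move=> mA; rewrite integral_indic// setIT. Qed.

Lemma measurable_miter n A : measurable A ->
  measurable_fun [set: X] (fun x => miter m n x A).
Proof.
move=> mA.
under eq_fun do rewrite miter_indic//.
apply: (miter_meas_rev n).1 => //.
exact/measurable_EFinP/measurable_indic.
Qed.

Lemma miter_rev n x A : measurable A ->
  miter m n.+1 x A = \int[m x]_z miter m n z A.
Proof.
move=> mA; rewrite miter_indic// (miter_meas_rev n).2//.
- by apply: eq_integral => z _; rewrite -miter_indic.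
- exact/measurable_EFinP/measurable_indic.
Qed.

Lemma invariant_int (nu : {measure set X -> \bar R}) :
  invariant_measure m nu -> forall f : X -> \bar R, (forall z, 0 <= f z) ->
  measurable_fun [set: X] f ->
  \int[nu]_x f x = \int[nu]_x \int[m x]_y f y.
Proof.
move=> inv f f0 mf.
rewrite -integral_mstep//; apply: eq_measure_integral => A mA _.
by rewrite inv.
Qed.
End Iter.

Section NmD.
Context d (X : measurableType d) (R : realType) (m : R.-ker X ~> X).

Lemma NmDE D x : NmD m D x <-> forall n, miter m n x D = 0.
Proof.
split => [H n|H n n0]; first exact: (H n.+1).
exact: H.
Qed.

Lemma measurable_NmD D : measurable D -> measurable (NmD m D).
Proof.
move=> mD.
have -> : NmD m D = \bigcap_n ((fun x => miter m n x D) @^-1` [set 0]).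
  apply/seteqP; split => x.
    by move/NmDE => H n _; exact: H.
  by move=> H; apply/NmDE => n; exact: H.
apply: bigcapT_measurable => n.
rewrite -[X in measurable X]setTI.
by apply: measurable_miter => //; exact: emeasurable_set1.
Qed.
End NmD.

Section Dir1.
Context d (X : measurableType d) (R : realType) (m : R.-pker X ~> X)
  (nu : {measure set X -> \bar R}).
Hypotheses (inv : invariant_measure m nu) (fin : nu setT < +oo).


Lemma nu_fin A : measurable A -> nu A \is a fin_num.
Proof.
move=> mA; rewrite ge0_fin_numE//.
by rewrite (le_lt_trans (le_measure _ _ _ (subsetT A))) ?inE.
Qed.

Lemma pker_fin x A : measurable A -> m x A \is a fin_num.
Proof.
move=> mA; rewrite ge0_fin_numE//.
rewrite (le_lt_trans (le_measure _ _ _ (subsetT A))) ?inE//.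
rewrite [X in X < _](_ : _ = 1%E) ?ltey//.
exact: prob_kernel.
Qed.

Lemma pker_compl x A : measurable A -> m x (~` A) = 1 - m x A.
Proof.
move=> mA.
have := measureU (m x) mA (measurableC mA) (setICr A).
rewrite setUv [X in X = _ -> _](_ : _ = 1%E); last exact: prob_kernel.
move=> ->.
by rewrite addeAC subee ?add0e// pker_fin.
Qed.

Lemma ergodic_connected : ergodic_laplacian m nu -> m_connected m nu.
Proof.
move=> erg D mD nuD0 nuDoo.
set N := NmD m D.
have mN : measurable N by exact: measurable_NmD.
have [//|N0] := eqVneq (nu N) 0.
have H1 : forall x, N x -> m x (~` N) = 0.
  move=> x Nx; apply: measure0_of_ae (measurableC mN) _.
  have : forall n, \forall z \ae m x, miter m n z D = 0.
    move=> n; apply: ae_of_int0 => //; first exact: measurable_miter.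
    by rewrite -miter_rev//; exact: ((NmDE m D x).1 Nx n.+1).
  move/ae_foralln; apply: filterS => z Hz /=; apply.
  exact/NmDE.
have H1' : forall x, N x -> m x D = 0.
  by move=> x Nx; have := (NmDE m D x).1 Nx 0%N.
have H2 : \forall x \ae nu, (~` N) x -> m x N = 0.
  apply: ae_of_int0_in => //; first exact: measurableC.
    exact: measurable_kernel.
  have h := inv mN.
  move: h; rewrite -(setUv N) ge0_integral_setU//; last 3 first.
  - exact: measurableC.
  - by rewrite setUv; exact: measurable_kernel.
  - by apply/disj_set2P; rewrite setICr.
  rewrite (eq_integral (fun _ => 1)); last first.
    move=> x; rewrite inE => Nx.
    rewrite -[N in m x N]setCK pker_compl; last exact: measurableC.
    by rewrite H1 // sube0.
  rewrite integral_cst// mul1e => h.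
  have := congr1 (fun t => t - nu N) h.
  by rewrite subee ?nu_fin// addeAC subee ?nu_fin// add0e => <-.
set u := fun x => (\1_N x : R).
have Lu : in_L1L2 nu u.
  have hint : \int[nu]_x (\1_N x)%:E < +oo.
    by rewrite integral_indic// setIT (le_lt_trans (le_measure _ _ _ (subsetT N))) ?inE.
  split.
    apply/integrableP; split; first exact/measurable_EFinP/measurable_indic.
    rewrite (eq_integral (fun x => (\1_N x)%:E)); first exact: hint.
    by move=> x _; rewrite /= /u ger0_norm.
  have -> : (fun x => ((u x) ^+ 2)%:E) = (fun x => (\1_N x)%:E).
    apply/funext => x; rewrite /u indicE.
    by case: (x \in N); rewrite ?expr1n ?expr0n.
  exact: hint.
have Lap : {ae nu, forall x, laplacian m u x = 0}.
  apply: filterS H2 => x Hx; rewrite /laplacian; apply: int0_of_ae.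
    apply/measurable_EFinP/measurable_funB; first exact: measurable_indic.
    exact: measurable_cst.
  case: (pselect (N x)) => Nx.
    have := ae_of_measure0 (measurableC mN) (H1 x Nx).
    apply: filterS => z /= nNz.
    by rewrite /u !indicE !mem_set// ?subrr//; exact: contrapT.
  have := ae_of_measure0 mN (Hx Nx).
  by apply: filterS => z Nz; rewrite /u !indicE !memNset// subrr.
have [c Hc] := erg u Lu Lap.
have Nae : \forall x \ae nu, N x.
  case: (eqVneq c 1%R) => [c1|c1].
    apply: filterS Hc => x; rewrite /u indicE.
    case: (boolP (x \in N)) => [/set_mem //|_ ] /= h.
    by exfalso; move: h; rewrite c1 => /eqP; rewrite eq_sym oner_eq0.
  exfalso; move/eqP: N0; apply; apply: measure0_of_ae => //.
  apply: filterS Hc => x; rewrite /u indicE.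
  case: (boolP (x \in N)) => [/set_mem Nx|/negP nx] /=.
    by move=> h1; move: c1; rewrite -h1 eqxx.
  by move=> _ Nx; apply: nx; exact: mem_set.
have : nu D = 0.
  rewrite inv//; apply: int0_of_ae; first exact: measurable_kernel.
  by apply: filterS Nae => x Nx; exact: H1'.
by move=> D0; move: nuD0; rewrite D0 ltxx.
Qed.
End Dir1.

Lemma sub0_fin (R : realType) (a b : \bar R) : 0 <= a -> 0 <= b -> a - b = 0 ->
  a < +oo /\ b < +oo.
Proof. by case: a b => [a| |] [b| |] //= => _ _; rewrite ?ltry. Qed.

Lemma small_inv (R : realType) (e : R) : (0 < e)%R -> exists k : nat, ((k.+1%:R)^-1 < e)%R.
Proof.
move=> e0; exists (Num.Def.trunc e^-1).
rewrite invf_plt ?posrE//; exact: truncnS_gt.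
Qed.

Lemma lt_truncS (R : realType) (y : R) : (y < (Num.Def.trunc `|y|).+1%:R)%R.
Proof. exact: le_lt_trans (ler_norm y) (truncnS_gt _). Qed.

Section Dir2.
Context d (X : measurableType d) (R : realType) (m : R.-pker X ~> X)
  (nu : {measure set X -> \bar R}).
Hypotheses (inv : invariant_measure m nu) (fin : nu setT < +oo).

Lemma lap_integrable (u : X -> R) x : measurable_fun setT u ->
  laplacian m u x = 0 -> (m x).-integrable setT (fun y => (u y - u x)%:E).
Proof.
move=> mu L; set f := fun y => (u y - u x)%:E.
have mf : measurable_fun setT f.
  exact/measurable_EFinP/measurable_funB.
move: L; rewrite /laplacian integralE => L.
have [pf nf] := sub0_fin (integral_ge0 _ (fun y _ => funepos_ge0 f y))
  (integral_ge0 _ (fun y _ => funeneg_ge0 f y)) L.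
apply/integrableP; split => //.
rewrite (eq_integral (fun y => f^\+ y + f^\- y)); last first.
  by move=> y _; have := congr1 (fun h => h y) (fune_abse f).
rewrite ge0_integralD//.
- exact: lte_add_pinfty.
- exact: measurable_funepos.
- exact: measurable_funeneg.
Qed.

Lemma jensen (u : X -> R) x c : measurable_fun setT u ->
  laplacian m u x = 0 ->
  (Order.max (u x - c)%R 0%R)%:E <= \int[m x]_y (Order.max (u y - c)%R 0%R)%:E.
Proof.
move=> mu L.
have ig := lap_integrable mu L.
have g0 : forall y, 0 <= (Order.max (u y - c)%R 0%R)%:E.
  by move=> y; rewrite lee_fin le_max lexx orbT.
have [uc|uc] := leP (u x - c)%R 0%R.
  by apply: integral_ge0.
idtac.
have mx1 : m x setT = 1 by exact: prob_kernel.
have ic : (m x).-integrable setT (fun=> (u x - c)%R%:E).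
  apply/integrableP; split; first exact: measurable_cst.
  by rewrite integral_cst// mx1 mule1 ltry.
have iD := integrableD measurableT ig ic.
have -> : (u x - c)%R%:E = \int[m x]_y ((u y - u x)%R%:E + (u x - c)%R%:E).
  rewrite integralD//.
  have -> : \int[m x]_y (u y - u x)%R%:E = 0 by exact: L.
  by rewrite add0e integral_cst// mx1 mule1.
apply: le_integral => //.
  apply: le_integrable iD => //.
    exact/measurable_EFinP/measurable_maxr/measurable_cst/measurable_funB.
  move=> y _; rewrite -EFinD subrKA /= !lee_fin.
  by case: (leP (u y - c)%R 0%R) => _; rewrite ?normr0 ?normr_ge0 ?lexx.
move=> y _; rewrite -EFinD subrKA lee_fin le_max lexx//.
Qed.

Lemma measurable_gt (u : X -> R) c : measurable_fun setT u ->
  measurable [set y | (c < u y)%R].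
Proof.
move=> mu.
have := mu measurableT _ (measurable_itv `]c, +oo[); rewrite setTI.
congr measurable; apply/seteqP; split => y /=; rewrite in_itv /= andbT//.
Qed.

Lemma stepA (u : X -> R) c : nu.-integrable setT (EFin \o u) ->
  {ae nu, forall x, laplacian m u x = 0} ->
  \forall x \ae nu, (u x <= c)%R -> m x [set y | (c < u y)%R] = 0.
Proof.
move=> iu Lap.
have mu : measurable_fun setT u by move/integrableP: iu => [/measurable_EFinP].
set g := fun y => (Order.max (u y - c)%R 0%R)%:E.
have g0 : forall y, 0 <= g y.
  by move=> y; rewrite lee_fin le_max lexx orbT.
have mg : measurable_fun setT g.
  exact/measurable_EFinP/measurable_maxr/measurable_cst/measurable_funB.
set G := fun x => \int[m x]_y g y.
have G0 : forall x, 0 <= G x by move=> x; exact: integral_ge0.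
have mG : measurable_fun setT G by exact: measurable_int_m.
have igfin : \int[nu]_x g x < +oo.
  have mb : measurable_fun setT (fun x => (`|u x| + `|c|)%R%:E).
    apply/measurable_EFinP/measurable_funD; last exact: measurable_cst.
    exact: measurableT_comp (@normr_measurable R setT) mu.
  apply: (@le_lt_trans _ _ (\int[nu]_x (`|u x| + `|c|)%R%:E)).
    apply: ge0_le_integral => // x _.
    rewrite /g lee_fin; case: (leP (u x - c)%R 0%R) => _.
      by rewrite addr_ge0.
    exact: le_trans (ler_norm _) (ler_normB _ _).
  under eq_integral do rewrite EFinD.
  rewrite ge0_integralD//; last first.
    exact/measurable_EFinP/(measurableT_comp (@normr_measurable R setT) mu).
  apply: lte_add_pinfty.
    by move/integrableP: iu => [_].
  by rewrite integral_cst// lte_mul_pinfty.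
have Iinv : \int[nu]_x G x = \int[nu]_x g x.
  by rewrite [RHS](invariant_int inv g0 mg).
have aeGg : \forall x \ae nu, g x <= G x.
  by apply: filterS Lap => x Lx; exact: jensen.
set h := fun x => maxe (G x - g x) 0.
have h0 : forall x, 0 <= h x by move=> x; rewrite /h le_max lexx orbT.
have mh : measurable_fun setT h.
  by apply: measurable_maxe; [exact: emeasurable_funB|exact: measurable_cst].
have aeG : \forall x \ae nu, G x = h x + g x.
  apply: filterS aeGg => x gG.
  by rewrite /h max_l ?subeK// sube_ge0.
have ih0 : \int[nu]_x h x = 0.
  have : \int[nu]_x G x = \int[nu]_x h x + \int[nu]_x g x.
    rewrite -ge0_integralD//. 
    apply: (ae_eq_integral (fun x => h x + g x)) => //.
      exact: emeasurable_funD.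
    by apply: filterS aeG => x + _.
  rewrite Iinv => hh.
  have := congr1 (fun t => t - \int[nu]_x g x) hh.
  have gfin : \int[nu]_x g x \is a fin_num.
    by rewrite ge0_fin_numE// integral_ge0.
  by rewrite subee// -addeA subee// adde0 => <-.
have aeh := ae_of_int0 h0 mh ih0.
apply: filterS2 aeG aeh => x Gx hx uxc.
have gx0 : g x = 0 by rewrite /g max_r// subr_le0.
have GX0 : G x = 0 by rewrite Gx hx gx0 adde0.
apply: measure0_of_ae; first exact: measurable_gt.
have := ae_of_int0 g0 mg GX0.
apply: filterS => y; rewrite /g => gy cuy.
move: gy; rewrite max_l; last by rewrite subr_ge0 ltW.
move=> [] /eqP; rewrite subr_eq0 => /eqP cu; move: cuy; rewrite /= cu ltxx.
by [].
Qed.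

Lemma stepB (D : set X) : measurable D ->
  (\forall x \ae nu, ~ D x -> m x D = 0) ->
  \forall x \ae nu, ~ D x -> NmD m D x.
Proof.
move=> mD hA.
suff : forall n, \forall x \ae nu, ~ D x -> miter m n x D = 0.
  move/ae_foralln; apply: filterS => x H nDx; apply/NmDE => n; exact: H n nDx.
elim => [|n IH]; first exact: hA.
case: IH => Z [mZ Z0 sZ].
have aeZ : \forall x \ae nu, m x Z = 0.
  apply: ae_of_int0 => //; first exact: measurable_kernel.
  by rewrite -inv.
apply: filterS2 hA aeZ => x hx hZ nDx.
rewrite miter_rev//; apply: int0_of_ae; first exact: measurable_miter.
have a1 := ae_of_measure0 mD (hx nDx).
have a2 := ae_of_measure0 mZ hZ.
apply: filterS2 a1 a2 => z nDz nZz.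
apply: contrapT => hne; apply: nZz; apply: sZ => /= h; apply: hne.
exact: h nDz.
Qed.

Lemma measurable_le (u : X -> R) c : measurable_fun setT u ->
  measurable [set y | (u y <= c)%R].
Proof.
move=> mu.
have := mu measurableT _ (measurable_itv `]-oo, c]); rewrite setTI.
congr measurable; apply/seteqP; split => y /=; rewrite in_itv //.
Qed.

Lemma connected_ergodic : m_connected m nu -> ergodic_laplacian m nu.
Proof.
move=> conn u [iu _] Lap.
have mu : measurable_fun setT u by move/integrableP: iu => [/measurable_EFinP].
have dich : forall c, nu [set x | (c < u x)%R] = 0 \/ nu [set x | (u x <= c)%R] = 0.
  move=> c; set D := [set x | (c < u x)%R].
  have mD : measurable D by exact: measurable_gt.
  have [D0|D0] := eqVneq (nu D) 0; [by left|right].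
  have nuD0 : 0 < nu D by rewrite lt0e D0 measure_ge0.
  have nuDoo : nu D < +oo.
    by rewrite (le_lt_trans (le_measure _ _ _ (subsetT D))) ?inE.
  have NN := conn D mD nuD0 nuDoo.
  have aeB : \forall x \ae nu, ~ D x -> NmD m D x.
    apply: stepB => //; apply: filterS (stepA c iu Lap) => x h nDx.
    by apply: h; rewrite leNgt; apply/negP.
  have aeN := ae_of_measure0 (measurable_NmD m mD) NN.
  apply: measure0_of_ae; first exact: measurable_le.
  apply: filterS2 aeB aeN => x h1 h2 ux; apply: h2; apply: h1.
  by apply/negP; rewrite -leNgt.
have [nuT0|nuTpos] := eqVneq (nu setT) 0.
  by exists 0%R; exact: measure0_ae.
set L := [set c | nu [set x | (u x <= c)%R] = 0].
have Ldown : forall a b, (a <= b)%R -> L b -> L a.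
  move=> a b ab Lb; apply/eqP; rewrite -measure_le0 -Lb le_measure ?inE //.
  - exact: measurable_le.
  - exact: measurable_le.
  - by move=> x /= ux; exact: le_trans ux ab.
have noall : forall (P : nat -> set X), (forall k, measurable (P k)) ->
    (forall k, nu (P k) = 0) -> (forall x, exists k, P k x) -> False.
  move=> P mP P0 cov.
  have : \forall x \ae nu, forall k, ~ P k x.
    by apply: ae_foralln => k; exact: ae_of_measure0 (mP k) (P0 k).
  move=> hh; move/eqP: nuTpos; apply; apply: measure0_of_ae => //.
  by apply: filterS hh => x h _; case: (cov x) => k; exact: h k.
have Lne : exists c, L c.
  apply: contrapT => nL.
  apply: (noall (fun k => [set x | (- k%:R < u x)%R])).
  - by move=> k; exact: measurable_gt.
  - move=> k; case: (dich (- k%:R)%R) => h //; exfalso; apply: nL.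
    by exists (- k%:R)%R.
  - move=> x; exists (Num.Def.trunc `|u x|).+1.
    by rewrite /= ltrNl; have := lt_truncS (- u x); rewrite normrN.
have Lub : exists c, ~ L c.
  apply: contrapT => nL.
  apply: (noall (fun k => [set x | (u x <= k%:R)%R])).
  - by move=> k; exact: measurable_le.
  - move=> k; apply: contrapT => h; apply: nL; exists k%:R; exact: h.
  - by move=> x; exists (Num.Def.trunc `|u x|).+1; exact/ltW/lt_truncS.
have hs : has_sup L.
  split; first by case: Lne => c Lc; exists c.
  case: Lub => c1 nL1; exists c1 => l Ll.
  rewrite leNgt; apply/negP => c1l; apply: nL1; apply: Ldown Ll.
  exact: ltW.
set cs := sup L.
exists cs.
have a1 : \forall x \ae nu, forall k : nat,
    ~ (u x <= cs - (k.+1%:R)^-1)%R.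
  apply: ae_foralln => k; apply: ae_of_measure0; first exact: measurable_le.
  have [l Ll hl] := @sup_adherent _ L (k.+1%:R)^-1 ltac:(by []) hs.
  exact: Ldown (ltW hl) Ll.
have a2 : \forall x \ae nu, forall k : nat,
    ~ (cs + (k.+1%:R)^-1 < u x)%R.
  apply: ae_foralln => k; apply: ae_of_measure0; first exact: measurable_gt.
  case: (dich (cs + (k.+1%:R)^-1)%R) => // h; exfalso.
  have := sup_upper_bound hs h.
  by rewrite -/cs gerDl leNgt invr_gt0 ltr0n.
apply: filterS2 a1 a2 => x h1 h2.
apply/eqP; rewrite eq_le; apply/andP; split.
  rewrite leNgt; apply/negP => lt.
  have [k hk] : exists k : nat, ((k.+1%:R)^-1 < u x - cs)%R.
    by apply: small_inv; rewrite subr_gt0.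
  by apply: (h2 k); rewrite -ltrBrDl.
rewrite leNgt; apply/negP => lt.
have [k hk] : exists k : nat, ((k.+1%:R)^-1 < cs - u x)%R.
  by apply: small_inv; rewrite subr_gt0.
apply: (h1 k); rewrite lerBrDl -lerBrDr; exact: ltW.
Qed.
End Dir2.

End Helpers.
Unset Implicit Arguments.
Set Strict Implicit.
Set Printing Implicit Defensive.

Theorem theorem2p21 (R : realType) (d : measure_display) (X : measurableType d)
  (dist : X -> X -> R) (m : R.-pker X ~> X) (nu : {measure set X -> \bar R}) :
  metric_random_walk_space dist m ->
  invariant_measure m nu ->
  (nu setT < +oo)%E ->
  (ergodic_laplacian m nu <-> m_connected m nu).
Proof.
move=> _ inv fin; split.
  exact: (Helpers.ergodic_connected inv fin).
exact: (Helpers.connected_ergodic inv fin).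
Qed.
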